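(* Let $p>2$ be a prime, $q=p^h$, and let $\mathcal{F}$ be the projective closure of $ax^ny^m+bx^n+cy^m=1$ over $\mathbb{F}_q$, where $a,b,c\in\mathbb{F}_q^*$ and $c\neq-\frac ab$. Then for all positive integers $m,n$ with $p\nmid mn$, $\mathcal{F}$ is $\mathbb{F}_q$-Frobenius classical with respect to lines.
   Context: With $\varphi=(1,x,y)$, $\tau$ a separating element and $D^{(k)}_\tau$ Hasse derivatives, the $\mathbb{F}_q$-Frobenius order sequence w.r.t. lines is the lexicographically smallest $\nu_0<\nu_1$ such that the $3\times3$ determinant with rows $(1,x^q,y^q)$, $(D^{(\nu_0)}_\tau\varphi_j)_j$, $(D^{(\nu_1)}_\tau\varphi_j)_j$ is nonzero; the curve is $\mathbb{F}_q$-Frobenius classical w.r.t. lines if $(\nu_0,\nu_1)=(0,1)$. *)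

(* Defs.v *)
From HB Require Import structures.
From mathcomp Require Import all_boot all_order all_algebra all_field.
Set Implicit Arguments. Unset Strict Implicit. Unset Printing Implicit Defensive.
Import Order.TTheory GRing.Theory.
Local Open Scope ring_scope.

Section Defs.
Variables (F : finFieldType) (K : fieldType) (iota : {rmorphism F -> K}).

(* Evaluation of a bivariate polynomial P(X,Y) over F at (x,y) in K:
   outer variable = Y, inner variable = X. *)
Definition eval2 (P : {poly {poly F}}) (x y : K) : K :=
  (map_poly (fun c : {poly F} => (map_poly iota c).[x]) P).[y].

Definition on_curve (a b c : F) (m n : nat) (x y : K) : Prop :=
  iota a * x ^+ n * y ^+ m + iota b * x ^+ n + iota c * y ^+ m = 1.

(* (K, x, y) is the function field F_q(F) of the curve with its coordinate
   functions: x, y satisfy the equation, x is transcendental over F_q, and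
   K = F_q(x, y). *)
Definition is_function_field (a b c : F) (m n : nat) (x y : K) : Prop :=
  [/\ on_curve a b c m n x y,
      (forall P : {poly F}, (map_poly iota P).[x] = 0 -> P = 0) &
      (forall z : K, exists P Q : {poly {poly F}},
          eval2 Q x y != 0 /\ z = eval2 P x y / eval2 Q x y)].

(* D = (D^{(k)})_k is the family of Hasse derivatives of K with respect to
   tau: an iterative higher derivation, trivial on constants, with
   D^{(1)} tau = 1 and D^{(k)} tau = 0 for k >= 2. *)
Definition is_hasse (tau : K) (D : nat -> K -> K) : Prop :=
  (forall u, D 0%N u = u) /\
  (forall k u v, D k (u + v) = D k u + D k v) /\
  (forall k u v, D k (u * v) = \sum_(i < k.+1) D i u * D (k - i)%N v) /\
  (forall k (c : F), (0 < k)%N -> D k (iota c) = 0) /\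
  (forall i j u, D i (D j u) = 'C(i + j, i)%:R * D (i + j)%N u) /\
  D 1%N tau = 1 /\ (forall k, (1 < k)%N -> D k tau = 0).

Definition phi (x y : K) (j : 'I_3) : K := nth 0 [:: 1; x; y] j.

Definition frob_det (q : nat) (x y : K) (D : nat -> K -> K) (nu0 nu1 : nat) : K :=
  \det (\matrix_(i < 3, j < 3)
          if i == 0 :> nat then phi x y j ^+ q
          else if i == 1 :> nat then D nu0 (phi x y j)
          else D nu1 (phi x y j)).

Definition lex_lt (m0 m1 n0 n1 : nat) : bool :=
  (m0 < n0)%N || ((m0 == n0) && (m1 < n1)%N).

Definition frob_order_seq (q : nat) (x y : K) (D : nat -> K -> K) (nu0 nu1 : nat) : Prop :=
  [/\ (nu0 < nu1)%N, frob_det q x y D nu0 nu1 != 0 &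
      forall m0 m1, (m0 < m1)%N -> lex_lt m0 m1 nu0 nu1 ->
        frob_det q x y D m0 m1 = 0].

Definition frobenius_classical_lines (q : nat) (x y : K) (D : nat -> K -> K) : Prop :=
  frob_order_seq q x y D 0 1.

End Defs.

(* Main.v *)
Require Import Defs.
From HB Require Import structures.
From mathcomp Require Import all_boot all_order all_algebra all_field.
From mathcomp Require Import ring.
Import GRing.Theory.
Local Open Scope ring_scope.
Set Implicit Arguments. Unset Strict Implicit.


Lemma der0 (K : fieldType) (d : K -> K) (dD : forall u v, d (u + v) = d u + d v) :
  d 0 = 0.
Proof. by apply: (addrI (d 0)); rewrite -dD !addr0. Qed.

Lemma derN (K : fieldType) (d : K -> K) (dD : forall u v, d (u + v) = d u + d v) u :
  d (- u) = - d u.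
Proof. by apply: (addrI (d u)); rewrite -dD !subrr (der0 dD). Qed.

Lemma derXu (K : fieldType) (d : K -> K) (dD : forall u v, d (u + v) = d u + d v)
  (dM : forall u v, d (u * v) = u * d v + d u * v) (d1 : d 1 = 0) u k :
  u * d (u ^+ k) = k%:R * u ^+ k * d u.
Proof.
elim: k => [|k IH]; first by rewrite expr0 d1 mulr0 mul0r mul0r.
rewrite exprS dM.
transitivity (u * (u * d (u^+k)) + u * (d u * u^+k)); first by ring.
rewrite IH; ring.
Qed.

Lemma derX0 (K : fieldType) (d : K -> K) 
  (dM : forall u v, d (u * v) = u * d v + d u * v) (d1 : d 1 = 0) u k :
  d u = 0 -> d (u ^+ k) = 0.
Proof.
move=> du; elim: k => [|k IH]; first by rewrite expr0 d1.
by rewrite exprS dM IH du mulr0 mul0r addr0.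
Qed.

Lemma derV (K : fieldType) (d : K -> K)
  (dM : forall u v, d (u * v) = u * d v + d u * v) (d1 : d 1 = 0) u :
  u != 0 -> d (u^-1) = - d u / u ^+ 2.
Proof.
move=> unz; have h := dM u u^-1; rewrite mulfV // d1 in h.
apply: (mulfI unz).
have -> : u * d (u^-1) = - (d u * u^-1) by apply/eqP; rewrite -addr_eq0 -h.
by field.
Qed.

Lemma der_horner (K : fieldType) (d : K -> K) (dD : forall u v, d (u + v) = d u + d v)
  (dM : forall u v, d (u * v) = u * d v + d u * v) (d1 : d 1 = 0) (r : {poly K}) z :
  (forall i, d r`_i = 0) -> d z = 0 -> d r.[z] = 0.
Proof.
move=> hr hz; rewrite horner_coef (big_morph d dD (der0 dD)).
by apply: big1 => i _; rewrite dM hr (derX0 dM d1 _ hz) mulr0 mul0r addr0.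
Qed.

Lemma derV0 (K : fieldType) (d : K -> K) (dD : forall u v, d (u + v) = d u + d v)
  (dM : forall u v, d (u * v) = u * d v + d u * v) (d1 : d 1 = 0) u :
  d u = 0 -> d (u^-1) = 0.
Proof.
move=> du; have [->|unz] := eqVneq u 0; first by rewrite invr0 (der0 dD).
by rewrite (derV dM d1 unz) du oppr0 mul0r.
Qed.

Lemma frob_det01 (K : fieldType) (q : nat) (x y : K) (D : nat -> K -> K) :
  frob_det q x y D 0 1 =
  1 ^+ q * (D 0%N x * D 1%N y - D 0%N y * D 1%N x)
  - x ^+ q * (D 0%N 1 * D 1%N y - D 0%N y * D 1%N 1)
  + y ^+ q * (D 0%N 1 * D 1%N x - D 0%N x * D 1%N 1).
Proof.
rewrite /frob_det (expand_det_row _ 0) !big_ord_recl big_ord0 /cofactor.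
rewrite !(expand_det_row _ 0) !big_ord_recl !big_ord0 /cofactor !det_mx11 !mxE /=.
rewrite /phi /= /bump /=. ring.
Qed.

Lemma evalPF (F : finFieldType) (K : fieldType) (iota : {rmorphism F -> K}) k0 k1 k2 n x :
  (map_poly iota (k0%:P + k1%:P * 'X^n + k2%:P * 'X^(n + n))).[x] =
  iota k0 + iota k1 * x ^+ n + iota k2 * (x ^+ n * x ^+ n).
Proof.
rewrite !rmorphD !rmorphM /= !map_polyC !map_polyXn !hornerE exprD; congr (_ + _); exact: mulrA.
Qed.

Ltac sidec := repeat (apply/andP; split); rewrite ?nat1r ?natr1; try assumption.

Theorem proposition4p2 (p h : nat) (F : finFieldType) (K : fieldType)
    (iota : {rmorphism F -> K}) (a b c : F) (m n : nat) (x y tau : K)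
    (D : nat -> K -> K) :
  prime p -> (2 < p)%N -> (0 < h)%N -> #|F| = (p ^ h)%N ->
  a != 0 -> b != 0 -> c != 0 -> c != - (a / b) ->
  (0 < m)%N -> (0 < n)%N -> ~~ (p %| m * n)%N ->
  is_function_field iota a b c m n x y ->
  is_hasse iota tau D ->
  frobenius_classical_lines #|F| x y D.
Proof.
move=> pr_p p2 h0 cardF anz bnz cnz cab m0 n0 pmn [E0 Tr Gen] [H0 [HD [HM [HC [HI [Ht1 Htk]]]]]].
set d := D 1%N.
have dD : forall u v, d (u + v) = d u + d v by move=> u v; exact: HD.
have dM : forall u v, d (u * v) = u * d v + d u * v.
  by move=> u v; rewrite /d HM !big_ord_recl big_ord0 /= !H0 addr0.
have dc : forall c, d (iota c) = 0 by move=> c'; exact: HC.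
have d1 : d 1 = 0 by rewrite -(rmorph1 iota) dc.
have dnat : forall k, d (k%:R) = 0 by move=> k; rewrite -(rmorph_nat iota) dc.
have dN : forall u, d (- u) = - d u by exact: derN.
have pF : p \in [pchar F] := card_finPcharP cardF pr_p.
have qK : (#|F|%:R : K) = 0.
  by rewrite -(rmorph_nat iota) cardF natrX (pcharf0 pF) expr0n eqn0Ngt h0 /= rmorph0.
have natK : forall k, ~~ (p %| k)%N -> (k%:R : K) != 0.
  by move=> k hk; rewrite -(rmorph_nat iota) fmorph_eq0 -(dvdn_pcharf pF).
have TrN : forall P : {poly F}, P != 0 -> (map_poly iota P).[x] != 0.
  by move=> P; apply: contra_neq; exact: Tr.
have q1 : (1 < #|F|)%N.
  rewrite cardF; apply: (@leq_trans p); first exact: ltnW.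
  by rewrite -{1}(expn1 p) leq_exp2l // prime_gt1.
case: n n0 pmn E0 Gen => [//|n'] _ pmn E0 Gen.
case: m m0 pmn E0 Gen => [//|m'] _ pmn E0 Gen.
have pm : ~~ (p %| m'.+1)%N by apply: contra pmn => /dvdn_mulr ->.
have pn : ~~ (p %| n'.+1)%N by apply: contra pmn => /dvdn_mull ->.
set N : K := n'.+1%:R.
set M : K := m'.+1%:R.
have Nnz : N != 0 by exact: natK.
have Mnz : M != 0 by exact: natK.
have xnz : x != 0.
  by have := TrN 'X (negbT (polyX_eq0 _)); rewrite map_polyX hornerX.
set Xn : K := x ^+ n'.+1.
have Xnnz : Xn != 0 by rewrite expf_neq0.
set B : K := iota a * Xn + iota c.
set C : K := 1 - iota b * Xn.
have Bnz : B != 0.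
  have : a%:P * 'X^(n'.+1) + c%:P != 0.
    apply/eqP => hP; move: (congr1 (coefp 0) hP); rewrite /=.
    by rewrite coefD coefCM coefXn coefC /= mulr0 add0r coefC; apply/eqP.
  move/TrN; by rewrite rmorphD rmorphM /= !map_polyC map_polyXn !hornerE.
have Cnz : C != 0.
  have : 1 - b%:P * 'X^(n'.+1) != 0.
    apply/eqP => hP; move: (congr1 (coefp 0) hP); rewrite /=.
    by rewrite coefB coefCM coefXn coef1 /= mulr0 subr0 coef0; apply/eqP; exact: oner_neq0.
  move/TrN; by rewrite rmorphB rmorph1 rmorphM /= !map_polyC map_polyXn !hornerE.
have Xqnz : x ^+ #|F| - x != 0.
  have : 'X^#|F| - 'X != 0 :> {poly F}.
    apply/eqP => hP; move: (congr1 (coefp 1) hP); rewrite /=.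
    rewrite coefB coefXn coefX coef0 (ltn_eqF q1) eqxx sub0r => /eqP.
    by rewrite oppr_eq0 oner_eq0.
  move/TrN; by rewrite rmorphB /= map_polyXn map_polyX !hornerE.
set e : K := iota a + iota b * iota c.
have enz : e != 0.
  have : a + b * c != 0.
    apply: contra_neq cab => hab.
    have ha : a = - (b * c) by apply/eqP; rewrite -addr_eq0 hab.
    by rewrite ha; field.
  by rewrite /e -rmorphM -rmorphD fmorph_eq0.
rewrite /on_curve -/Xn in E0.
set Ym : K := y ^+ m'.+1.
rewrite -/Ym in E0.
have YB : Ym * B = C by rewrite /C -E0 /B; ring.
have Ymnz : Ym != 0 by apply: contraNneq Cnz => hY; rewrite -YB hY mul0r.
have ynz : y != 0 by apply: contraNneq Ymnz => hy; rewrite /Ym hy expr0n.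
have dXn : d Xn = N * Xn * d x / x.
  apply: (mulfI xnz); rewrite (derXu dD dM d1) -/N -/Xn; by field.
have dYm : d Ym = M * Ym * d y / y.
  apply: (mulfI ynz); rewrite (derXu dD dM d1) -/M -/Ym; by field.
have dxq : d (x ^+ #|F|) = 0.
  have := derXu dD dM d1 x #|F|; rewrite qK !mul0r => /eqP.
  by rewrite mulf_eq0 (negbTE xnz) /= => /eqP.
have dyq : d (y ^+ #|F|) = 0.
  have := derXu dD dM d1 y #|F|; rewrite qK !mul0r => /eqP.
  by rewrite mulf_eq0 (negbTE ynz) /= => /eqP.
have E1 := congr1 d E0; rewrite d1 !dD !dM !dc dXn dYm in E1.
have Ym_eq : Ym = C / B by rewrite -YB mulfK.
pose g : K := - (N * e * Xn) / (M * B * C).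
have y1eq : d y = y * g * d x / x.
  have : (d y - y * g * d x / x) * (M * C / y) = 0.
    apply: (etrans _ E1); rewrite Ym_eq /g /e; rewrite /B /C; field; sidec.
  move/eqP; rewrite mulf_eq0 subr_eq0 => /orP [/eqP -> //|].
  by rewrite !mulf_eq0 invr_eq0 (negbTE Mnz) (negbTE Cnz) (negbTE ynz).
have deval : d x = 0 -> forall P, d (eval2 iota P x y) = 0.
  move=> dx0 P; have dy0 : d y = 0 by rewrite y1eq dx0 mulr0 mul0r.
  rewrite /eval2; apply: (der_horner dD dM d1) => // i.
  rewrite coef_map_id0; last by rewrite map_poly0 horner0.
  apply: (der_horner dD dM d1) => // j.
  by rewrite coef_map /= dc.
have x1nz : d x != 0.
  apply/negP => /eqP dx0.
  have [P [Q [Qnz tauE]]] := Gen tau.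
  have := Ht1; rewrite -/d tauE dM (derV dM d1 Qnz) !(deval dx0) oppr0 !mul0r mulr0 addr0 => /eqP.
  by rewrite eq_sym oner_eq0.
split => //; last first.
  move=> m0' m1' lt /orP [//|/andP [/eqP e0 l1]].
  by move: lt l1; rewrite e0; case: m1'.
rewrite frob_det01 !H0 -/d d1.
apply/negP => /eqP W0.
have W : (x ^+ #|F| - x) * d y - (y ^+ #|F| - y) * d x = 0.
  apply/eqP; rewrite -oppr_eq0; apply/eqP; rewrite -W0 expr1n; ring.
have W2 : (x ^+ #|F| - x) * d (d y) - (y ^+ #|F| - y) * d (d x) = 0.
  have := congr1 d W; rewrite (der0 dD) => hh; rewrite !(dD, dM, dN) dxq dyq in hh.
  rewrite -hh; ring.
have Wr : d x * d (d y) - d y * d (d x) = 0.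
  have : (x ^+ #|F| - x) * (d x * d (d y) - d y * d (d x)) = 0.
    have -> : (x ^+ #|F| - x) * (d x * d (d y) - d y * d (d x)) =
      d x * ((x ^+ #|F| - x) * d (d y) - (y ^+ #|F| - y) * d (d x))
      - d (d x) * ((x ^+ #|F| - x) * d y - (y ^+ #|F| - y) * d x) by ring.
    by rewrite W W2 !mulr0 subrr.
  by move/eqP; rewrite mulf_eq0 (negbTE Xqnz) /= => /eqP.
have de : d e = 0 by rewrite /e !(dD, dM, dc) ?mulr0 ?mul0r ?addr0.
have dNc : d N = 0 := dnat _.
have dMc : d M = 0 := dnat _.
have dB : d B = iota a * d Xn by rewrite /B !(dD, dM, dc) ?mulr0 ?mul0r ?addr0.
have dC : d C = - (iota b * d Xn) by rewrite /C !(dD, dM, dc, dN, d1) ?mulr0 ?mul0r ?addr0 ?add0r.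
have MBCnz : M * B * C != 0 by rewrite !mulf_neq0.
set NPK : K := M * n'%:R * B * C - 2%:R * N * M * iota a * Xn * C + m'%:R * N * e * Xn.
have key : y * d x ^+ 3 * g * NPK / (x ^+ 2 * M * B * C) = d x * d (d y) - d y * d (d x).
  rewrite y1eq /g !(dM, dN, dD, dNc, dMc, de, dB, dC, dXn, dc, d1, derV dM d1 xnz, derV dM d1 MBCnz) y1eq.
  rewrite /g /NPK /B /C /e; field; sidec.
have gnz : g != 0.
  by rewrite /g mulf_neq0 ?oppr_eq0 ?invr_eq0 ?mulf_neq0.
have NP0 : NPK = 0.
  have -> : NPK = (y * d x ^+ 3 * g * NPK / (x ^+ 2 * M * B * C)) *
     (x ^+ 2 * M * B * C) / (y * d x ^+ 3 * g).
    by field; sidec.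
  by rewrite key Wr !mul0r.
pose nF : F := n'%:R. pose mF : F := m'%:R.
pose k0 : F := (mF + 1) * nF * c.
pose k1 : F := (mF + 1) * nF * (a - b * c) - (1 + 1) * (nF + 1) * (mF + 1) * a
   + mF * (nF + 1) * (a + b * c).
pose k2 : F := (mF + 1) * (nF + 1 + 1) * a * b.
pose PF : {poly F} := k0%:P + k1%:P * 'X^(n'.+1) + k2%:P * 'X^(n'.+1 + n'.+1).
have PFE : (map_poly iota PF).[x] = NPK.
  rewrite (evalPF iota k0 k1 k2 (n'.+1) x) -/Xn.
  rewrite /k0 /k1 /k2 /nF /mF !(rmorph_nat, rmorphM, rmorphD, rmorphB, rmorph1).
  rewrite /NPK /B /C /e /N /M -!natr1; ring.
have PFnz : PF != 0.
  have nn0 : (n'.+1 + n'.+1 == 0)%N = false by [].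
  have nn1 : (n'.+1 + n'.+1 == n'.+1)%N = false by apply/negbTE; rewrite eq_sym neq_ltn addnS ltnS leq_addr.
  have [k0z|k0nz] := eqVneq k0 0; last first.
    apply/eqP => hP; move: (congr1 (coefp 0) hP); rewrite /=.
    by rewrite !coefD !coefCM !coefXn !coefC /= !mulr0 !addr0 => /eqP; rewrite (negbTE k0nz).
  have pn' : (p %| n')%N.
    move: k0z; rewrite /k0 /nF /mF natr1 -natrM => /eqP; rewrite mulf_eq0 (negbTE cnz) orbF.
    by rewrite -(dvdn_pcharf pF) Euclid_dvdM // (negbTE pm).
  have k2nz : k2 != 0.
    rewrite /k2 /nF /mF !natr1 -natrM !mulf_neq0 // -(dvdn_pcharf pF) Euclid_dvdM // (negbTE pm) /=.
    rewrite -addn2 dvdn_addr //; apply/negP => /dvdn_leq => /(_ isT).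
    by rewrite leqNgt p2.
  apply/eqP => hP; move: (congr1 (coefp (n'.+1 + n'.+1)) hP); rewrite /=.
  rewrite !coefD !coefCM !coefXn !coefC nn0 nn1 eqxx /=.
  by rewrite mulr0 mulr1 !add0r => /eqP; rewrite (negbTE k2nz).
by move: (TrN _ PFnz); rewrite PFE NP0 eqxx.
Qed.
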